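(* Let $D,W,N_0,\zeta,P_A>0$ be fixed. For a product of channel gains $x=g h>0$ let $\gamma=\frac{\zeta P_A x}{WN_0}$, $\alpha=\mathbb{L}_0\!\left(\frac{\gamma-1}{e}\right)+1$ with $\mathbb{L}_0$ the principal Lambert W function, and $$\hat\tau_S(x)=\frac{D\ln2}{W\alpha},\qquad \hat\tau_0(x)=\frac{D\ln2}{W\alpha\gamma}\left(2^{\alpha/\ln2}-1\right),$$ i.e. the optimal information transmission and energy harvesting times of a single source with uplink gain $g$ and downlink gain $h$ transmitting $D$ bits directly to the AP when the maximum power constraint is inactive. Then $\hat\tau_S$ and $\hat\tau_0$ are decreasing functions of $x=gh$.
   Context: Single source wireless powered network: the source harvests energy $\zeta P_A h\tau_0$ from the AP during time $\tau_0$, then transmits $D$ bits during time $\tau_S$ to the AP over an AWGN channel with gain $g$, bandwidth $W$, noise spectral density $N_0$; the maximum transmit power is assumed large enough not to constrain the problem. *)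

(* Defs.v *)
From Stdlib Require Import Reals Lra ClassicalEpsilon.
Open Scope R_scope.

(* Principal branch of the Lambert W function: for y >= -1/e, the unique
   w >= -1 with w * exp w = y (chosen by Hilbert's epsilon; only used for
   arguments y > -1/e where it is well defined). *)
Definition LambertW0 (y : R) : R :=
  epsilon (inhabits 0) (fun w => -1 <= w /\ w * exp w = y).

Definition gammaW (zeta PA W N0 x : R) : R := zeta * PA * x / (W * N0).

Definition alphaW (zeta PA W N0 x : R) : R :=
  LambertW0 ((gammaW zeta PA W N0 x - 1) / exp 1) + 1.

Definition tauS_hat (D W zeta PA N0 x : R) : R :=
  D * ln 2 / (W * alphaW zeta PA W N0 x).

Definition tau0_hat (D W zeta PA N0 x : R) : R :=
  D * ln 2 / (W * alphaW zeta PA W N0 x * gammaW zeta PA W N0 x)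
  * (Rpower 2 (alphaW zeta PA W N0 x / ln 2) - 1).

(* Main.v *)
Require Import Defs.
From Stdlib Require Import Reals Lra ClassicalEpsilon.
From Coquelicot Require Import Coquelicot.
Open Scope R_scope.

Lemma exp_minus1 (d : R) : 0 < d -> 1 - d < exp (- d).
Proof. intros Hd. pose proof (exp_ineq1 (- d)). lra. Qed.

Lemma wexp_mono (u v : R) : -1 <= u -> u < v -> u * exp u < v * exp v.
Proof.
  intros Hu Huv. set (d := v - u).
  assert (Hd : 0 < d) by (unfold d; lra).
  assert (Hv : v = u + d) by (unfold d; lra).
  rewrite Hv, exp_plus.
  assert (Ed : 1 < exp d) by (pose proof (exp_ineq1 d); lra).
  assert (Hk : (1 - d) * exp d < 1).
  { pose proof (exp_minus1 d Hd). rewrite exp_Ropp in H.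
    pose proof (exp_pos d).
    apply (Rmult_lt_compat_r (exp d)) in H; auto.
    rewrite Rinv_l in H; lra. }
  assert (0 < u * (exp d - 1) + d * exp d).
  { assert (u * (exp d - 1) >= -1 * (exp d - 1)) by nra. nra. }
  pose proof (exp_pos u). nra.
Qed.

Lemma W_spec (y : R) : -1 / exp 1 < y ->
  -1 < LambertW0 y /\ LambertW0 y * exp (LambertW0 y) = y.
Proof.
  intros Hy.
  assert (Ex : exists w, -1 <= w /\ w * exp w = y).
  { set (M := Rmax y 0 + 1).
    assert (HM : 1 <= M) by (unfold M; pose proof (Rmax_r y 0); lra).
    assert (HyM : y < M) by (unfold M; pose proof (Rmax_l y 0); lra).
    assert (EM : M <= M * exp M).
    { pose proof (exp_ineq1_le M). pose proof (exp_pos M). nra. }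
    destruct (IVT (fun w => w * exp w - y) (-1) M) as [z [Hz1 Hz2]].
    - intros w. reg.
    - lra.
    - assert (E: exp (-1) = / exp 1) by (rewrite <- exp_Ropp; f_equal; ring). rewrite E. unfold Rdiv in Hy. lra.
    - lra.
    - exists z. split; lra. }
  pose proof (epsilon_spec (inhabits 0) (fun w => -1 <= w /\ w * exp w = y) Ex) as [H1 H2].
  fold (LambertW0 y) in H1, H2.
  split; auto.
  destruct H1 as [H1|H1]; auto.
  rewrite <- H1 in H2. assert (E: exp (-1) = / exp 1) by (rewrite <- exp_Ropp; f_equal; ring). rewrite E in H2. unfold Rdiv in Hy. lra.
Qed.

Lemma W_mono (y1 y2 : R) : -1 / exp 1 < y1 -> y1 < y2 -> LambertW0 y1 < LambertW0 y2.
Proof.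
  intros H1 H12.
  destruct (W_spec y1 H1) as [A1 B1].
  destruct (W_spec y2 ltac:(lra)) as [A2 B2].
  destruct (Rlt_or_le (LambertW0 y1) (LambertW0 y2)) as [h|h]; auto.
  destruct h as [h|h].
  - pose proof (wexp_mono (LambertW0 y2) (LambertW0 y1) ltac:(lra) h). lra.
  - rewrite h in B2. lra.
Qed.

Definition phi (a : R) := (1 - 2*a) * exp a * exp a + (a*a + 2*a - 2) * exp a + 1.

Lemma phi_neg (a : R) : 0 < a -> phi a < 0.
Proof.
  intros Ha.
  destruct (MVT_cor2 phi (fun t => t * exp t * (t + 4 - 4 * exp t)) 0 a Ha) as [c [Hc1 Hc2]].
  - intros c _. apply is_derive_Reals. unfold phi. auto_derive; auto. ring.
  - assert (phi 0 = 0) by (unfold phi; rewrite exp_0; ring).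
    assert (c * exp c * (c + 4 - 4 * exp c) < 0).
    { pose proof (exp_ineq1 c ltac:(lra)). pose proof (exp_pos c).
      assert (0 < c * exp c) by nra. nra. }
    nra.
Qed.

Definition Dn (a : R) := a * (1 + (a - 1) * exp a).

Lemma Dn_pos (a : R) : 0 < a -> 0 < 1 + (a - 1) * exp a.
Proof.
  intros Ha. destruct (Rle_or_lt 1 a).
  - pose proof (exp_pos a). nra.
  - pose proof (exp_minus1 a Ha). rewrite exp_Ropp in H0.
    pose proof (exp_pos a).
    apply (Rmult_lt_compat_r (exp a)) in H0; auto.
    rewrite Rinv_l in H0; lra.
Qed.

Definition gf (a : R) := (exp a - 1) / Dn a.

Lemma gf_decr (a b : R) : 0 < a -> a < b -> gf b < gf a.
Proof.
  intros Ha Hab.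
  destruct (MVT_cor2 gf (fun t => phi t / (Dn t * Dn t)) a b Hab) as [c [Hc1 Hc2]].
  - intros c Hc. apply is_derive_Reals.
    assert (P := Dn_pos c ltac:(lra)).
    unfold gf, Dn. auto_derive.
    + apply Rmult_integral_contrapositive; split; lra.
    + unfold phi, Dn. field. split; lra.
  - assert (phi c / (Dn c * Dn c) < 0).
    { assert (P := Dn_pos c ltac:(lra)). assert (0 < Dn c) by (unfold Dn; nra).
      pose proof (phi_neg c ltac:(lra)).
      unfold Rdiv. apply Rmult_neg_pos; auto. apply Rinv_0_lt_compat; nra. }
    nra.
Qed.

Theorem lemma6 (D W N0 zeta PA : R) :
  0 < D -> 0 < W -> 0 < N0 -> 0 < zeta -> 0 < PA ->
  (forall x y : R, 0 < x -> x < y ->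
     tauS_hat D W zeta PA N0 y < tauS_hat D W zeta PA N0 x) /\
  (forall x y : R, 0 < x -> x < y ->
     tau0_hat D W zeta PA N0 y < tau0_hat D W zeta PA N0 x).
Proof.
  intros HD HW HN Hz HP.
  set (c := zeta * PA / (W * N0)).
  assert (Hc : 0 < c) by (unfold c; apply Rdiv_lt_0_compat; nra).
  assert (Hg : forall x, gammaW zeta PA W N0 x = c * x) by (intros; unfold gammaW, c; field; lra).
  assert (He : 0 < exp 1) by apply exp_pos.
  assert (Harg : forall x, 0 < x -> -1 / exp 1 < (gammaW zeta PA W N0 x - 1) / exp 1).
  { intros x Hx. rewrite Hg. unfold Rdiv. apply Rmult_lt_compat_r.
    apply Rinv_0_lt_compat; lra. nra. }
  assert (Hapos : forall x, 0 < x -> 0 < alphaW zeta PA W N0 x).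
  { intros x Hx. unfold alphaW. destruct (W_spec _ (Harg x Hx)). lra. }
  assert (Hamono : forall x y, 0 < x -> x < y -> alphaW zeta PA W N0 x < alphaW zeta PA W N0 y).
  { intros x y Hx Hxy. unfold alphaW. apply Rplus_lt_compat_r. apply W_mono; auto.
    rewrite !Hg. unfold Rdiv. apply Rmult_lt_compat_r. apply Rinv_0_lt_compat; lra. nra. }
  assert (Hgam : forall x, 0 < x -> gammaW zeta PA W N0 x =
     1 + (alphaW zeta PA W N0 x - 1) * exp (alphaW zeta PA W N0 x)).
  { intros x Hx. destruct (W_spec _ (Harg x Hx)) as [_ B]. unfold alphaW.
    replace (LambertW0 ((gammaW zeta PA W N0 x - 1) / exp 1) + 1 - 1) with
      (LambertW0 ((gammaW zeta PA W N0 x - 1) / exp 1)) by ring.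
    set (G := gammaW zeta PA W N0 x) in *. set (L := LambertW0 ((G - 1) / exp 1)) in *. rewrite exp_plus. replace (L * (exp L * exp 1)) with ((L * exp L) * exp 1) by ring. rewrite B.
    field. lra. }
  split.
  - intros x y Hx Hxy. unfold tauS_hat.
    pose proof (Hapos x Hx). pose proof (Hamono x y Hx Hxy).
    pose proof ln_lt_2.
    assert (0 < ln 2) by (rewrite <- ln_1; apply ln_increasing; lra).
    unfold Rdiv. apply Rmult_lt_compat_l. nra.
    apply Rinv_lt_contravar. apply Rmult_lt_0_compat; apply Rmult_lt_0_compat; lra. apply Rmult_lt_compat_l; lra.
  - assert (Ht : forall x, 0 < x -> tau0_hat D W zeta PA N0 x = D * ln 2 / W * gf (alphaW zeta PA W N0 x)).
    { intros x Hx. unfold tau0_hat, gf, Dn. rewrite <- (Hgam x Hx).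
      unfold Rpower. pose proof (Hapos x Hx).
      assert (0 < ln 2) by (rewrite <- ln_1; apply ln_increasing; lra).
      replace (alphaW zeta PA W N0 x / ln 2 * ln 2) with (alphaW zeta PA W N0 x) by (field; lra).
      rewrite Hg. field. repeat split; nra. }
    intros x y Hx Hxy. rewrite (Ht x Hx), (Ht y ltac:(lra)).
    assert (0 < ln 2) by (rewrite <- ln_1; apply ln_increasing; lra).
    apply Rmult_lt_compat_l. unfold Rdiv. apply Rmult_lt_0_compat; [nra|]. apply Rinv_0_lt_compat; lra.
    apply gf_decr. apply Hapos; auto. apply Hamono; auto.
Qed.
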